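(* For real $s>1$ let $u_s(t):=t\big(\frac{s+t}{s-1}\big)^{s-1}$. For each $s>1$ the equation $u_s(t)=1$ has a unique solution $t=c(s)$ with $t\ge-1$; it is a simple solution and $c(s)\in(0,1)$. The function $c$ is $C^\infty$ on $(1,\infty)$, strictly decreasing, and $c(s)\to c_0$ as $s\to\infty$, where $c_0\approx0.278465$ is the unique real number with $c_0e^{c_0+1}=1$, $0<c_0<1$. In particular, for every even integer $s\ge2$, the negative real root of $\psi_s(z):=z^{s-1}(z+s)-(s-1)^{s-1}$ is $z=-s-c(s)$. *)

(* Defs.v *)
From Stdlib Require Import Reals.
From Coquelicot Require Import Coquelicot.
Open Scope R_scope.

(* u_s(t) = t * ((s+t)/(s-1))^(s-1), real exponent (meaningful for s > 1, t >= -1,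
   where the base (s+t)/(s-1) is positive). *)
Definition u (s t : R) : R := t * Rpower ((s + t) / (s - 1)) (s - 1).

Definition psi (n : nat) (z : R) : R :=
  z ^ (n - 1) * (z + INR n) - (INR n - 1) ^ (n - 1).

(* Main.v *)
Require Import Defs.
From Stdlib Require Import Reals.
From Coquelicot Require Import Coquelicot.
From Stdlib Require Import Lra Lia Psatz ClassicalEpsilon.
Open Scope R_scope.


Definition K (s t : R) : R := ln t + (s - 1) * (ln (s + t) - ln (s - 1)).

Lemma u_expK s t : 1 < s -> 0 < t -> u s t = exp (K s t).
Proof.
intros Hs Ht. unfold u, Rpower, K.
rewrite ln_div by lra.
rewrite exp_plus, exp_ln by lra. reflexivity.
Qed.

Lemma K_incr_t s t1 t2 : 1 < s -> 0 < t1 -> t1 < t2 -> K s t1 < K s t2.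
Proof.
intros Hs H1 H2. unfold K.
assert (ln t1 < ln t2) by (apply ln_increasing; lra).
assert (ln (s + t1) < ln (s + t2)) by (apply ln_increasing; lra).
nra.
Qed.

Lemma u_le0 s t : 1 < s -> -1 <= t <= 0 -> u s t <= 0.
Proof.
intros Hs Ht. unfold u, Rpower.
assert (0 < exp ((s - 1) * ln ((s + t) / (s - 1)))) by apply exp_pos.
nra.
Qed.

Lemma u_one_K s t : 1 < s -> 0 < t -> (u s t = 1 <-> K s t = 0).
Proof.
intros Hs Ht. rewrite u_expK by lra. split; intro H.
- rewrite <- (ln_exp (K s t)), H. apply ln_1.
- rewrite H. apply exp_0.
Qed.

Lemma u_derive s t : 1 < s -> -1 < t ->
  is_derive (u s) t (exp ((s - 1) * ln ((s + t) / (s - 1))) * (1 + t * (s-1) / (s + t))).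
Proof.
intros Hs Ht. unfold u, Rpower.
auto_derive.
- apply Rdiv_lt_0_compat; lra.
- unfold Rdiv. field. lra.
Qed.

Lemma derive_cont f x d : is_derive f x d -> continuity_pt f x.
Proof.
intro H. apply is_derive_Reals in H. apply derivable_continuous_pt.
exact (exist _ d H).
Qed.

Lemma u_cont s t : 1 < s -> -1 < t -> continuity_pt (u s) t.
Proof. intros. eapply derive_cont. apply u_derive; auto. Qed.

Lemma u_at1 s : 1 < s -> 1 < u s 1.
Proof.
intros Hs. unfold u, Rpower. rewrite Rmult_1_l.
assert (0 < ln ((s + 1) / (s - 1))).
{ rewrite <- ln_1. apply ln_increasing. lra.
  apply Rmult_lt_reg_r with (s - 1). lra. unfold Rdiv. rewrite Rmult_assoc, Rinv_l by lra. lra. }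
assert (0 < (s - 1) * ln ((s + 1) / (s - 1))) by nra.
pose proof (exp_ineq1 _ (Rgt_not_eq _ _ H0)). lra.
Qed.

Lemma u_at0 s : u s 0 = 0.
Proof. unfold u. ring. Qed.

Definition cP (s t : R) : Prop := 0 < t < 1 /\ K s t = 0.

Lemma cP_ex s : 1 < s -> exists t, cP s t.
Proof.
intros Hs.
destruct (Ranalysis5.IVT_interv (fun t => u s t - 1) 0 1) as [z [Hz1 Hz2]].
- intros a Ha. apply continuity_pt_minus. apply u_cont; lra. apply continuity_pt_const. intros x y; reflexivity.
- lra.
- rewrite u_at0. lra.
- pose proof (u_at1 s Hs). lra.
- assert (Hu : u s z = 1) by lra.
  assert (z <> 0). { intro E. subst. rewrite u_at0 in Hu. lra. }
  assert (z <> 1). { intro E. subst. pose proof (u_at1 s Hs). lra. }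
  exists z. split. lra. apply u_one_K; lra.
Qed.

Definition c (s : R) : R := epsilon (inhabits 0) (cP s).

Lemma c_spec s : 1 < s -> cP s (c s).
Proof. intro Hs. unfold c. apply epsilon_spec. apply cP_ex; auto. Qed.

Lemma K_inj s t1 t2 : 1 < s -> 0 < t1 -> 0 < t2 -> K s t1 = K s t2 -> t1 = t2.
Proof.
intros Hs H1 H2 E. destruct (Rtotal_order t1 t2) as [L|[L|L]]; auto.
- pose proof (K_incr_t s t1 t2 Hs H1 L). lra.
- pose proof (K_incr_t s t2 t1 Hs H2 L). lra.
Qed.

Lemma c_unique s t : 1 < s -> -1 <= t -> u s t = 1 -> t = c s.
Proof.
intros Hs Ht Hu. destruct (c_spec s Hs) as [Hc1 Hc2].
assert (0 < t). { destruct (Rle_or_lt t 0); auto. pose proof (u_le0 s t Hs (conj Ht H)). lra. }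
apply (K_inj s); try lra. apply u_one_K in Hu; auto. lra.
Qed.

Lemma loc_gt (a x : R) : a < x -> locally x (fun y => a < y).
Proof.
intro H. assert (Hp : 0 < x - a) by lra. exists (mkposreal _ Hp). intros y Hy.
change (Rabs (y - x) < x - a) in Hy. apply Rabs_def2 in Hy. lra.
Qed.

Lemma ln_lt_sub1 y : 0 < y -> y <> 1 -> ln y < y - 1.
Proof.
intros Hy H1. assert (ln y <> 0) by (apply ln_neq_0; auto).
pose proof (exp_ineq1 _ H). rewrite exp_ln in H0 by auto. lra.
Qed.

Definition Fa (b a : R) := a * (ln (a + b) - ln a).

Lemma Fa_derive b a : 0 < b -> 0 < a ->
  derivable_pt_lim (Fa b) a (ln (a + b) - ln a - b / (a + b)).
Proof.
intros Hb Ha. apply is_derive_Reals. unfold Fa. auto_derive.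
- split; lra.
- field. lra.
Qed.

Lemma Fa_deriv_pos b a : 0 < b -> 0 < a -> 0 < ln (a + b) - ln a - b / (a + b).
Proof.
intros Hb Ha.
assert (Hy : 0 < a / (a + b) < 1).
{ split. apply Rdiv_lt_0_compat; lra.
  apply Rmult_lt_reg_r with (a + b). lra. unfold Rdiv. rewrite Rmult_assoc, Rinv_l by lra. lra. }
pose proof (ln_lt_sub1 (a / (a + b)) (proj1 Hy) ltac:(lra)).
rewrite ln_div in H by lra.
assert (a / (a + b) - 1 = - (b / (a + b))) by (field; lra).
lra.
Qed.

Lemma Fa_incr b a1 a2 : 0 < b -> 0 < a1 -> a1 < a2 -> Fa b a1 < Fa b a2.
Proof.
intros Hb H1 H2.
destruct (MVT_cor2 (Fa b) (fun a => ln (a + b) - ln a - b / (a + b)) a1 a2 H2) as [x [Hx1 Hx2]].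
- intros x Hx. apply Fa_derive; lra.
- pose proof (Fa_deriv_pos b x Hb ltac:(lra)). nra.
Qed.

Lemma K_Fa s t : K s t = ln t + Fa (1 + t) (s - 1).
Proof. unfold K, Fa. f_equal. f_equal. f_equal. f_equal. ring. Qed.

Lemma K_incr_s s1 s2 t : 1 < s1 -> s1 < s2 -> 0 < t -> K s1 t < K s2 t.
Proof.
intros. rewrite !K_Fa. pose proof (Fa_incr (1 + t) (s1 - 1) (s2 - 1)). lra.
Qed.

Lemma c_decr s1 s2 : 1 < s1 -> s1 < s2 -> c s2 < c s1.
Proof.
intros H1 H2. destruct (c_spec s1 H1) as [[A1 B1] C1]. destruct (c_spec s2 ltac:(lra)) as [[A2 B2] C2].
pose proof (K_incr_s s1 s2 (c s2) H1 H2 A2).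
destruct (Rlt_or_le (c s2) (c s1)) as [L|L]; auto.
destruct (Req_dec (c s2) (c s1)) as [E|E].
- rewrite E in H, C2. lra.
- pose proof (K_incr_t s1 (c s1) (c s2) H1 A1 ltac:(lra)). lra.
Qed.

Lemma K_derive_s s t : 1 < s -> 0 < t ->
  is_derive (fun s => K s t) s (ln (s + t) - ln (s - 1) - (1 + t) / (s + t)).
Proof.
intros Hs Ht. unfold K. auto_derive.
- split; lra.
- unfold Rminus. field. lra.
Qed.

Lemma K_cont_s s t : 1 < s -> 0 < t -> continuity_pt (fun s => K s t) s.
Proof. intros. eapply derive_cont. apply K_derive_s; auto. Qed.

Lemma c_cont s0 : 1 < s0 -> continuity_pt c s0.
Proof.
intros Hs0. apply continuity_pt_locally. intros eps.
destruct (c_spec s0 Hs0) as [[A0 B0] C0].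
set (e := Rmin eps (c s0 / 2)).
assert (He : 0 < e) by (apply Rmin_pos; [apply cond_pos|lra]).
assert (He2 : e <= c s0 / 2) by apply Rmin_r.
assert (He3 : e <= eps) by apply Rmin_l.
assert (Kp : 0 < K s0 (c s0 + e)).
{ pose proof (K_incr_t s0 (c s0) (c s0 + e) Hs0 A0 ltac:(lra)). lra. }
assert (Km : K s0 (c s0 - e) < 0).
{ pose proof (K_incr_t s0 (c s0 - e) (c s0) Hs0 ltac:(lra) ltac:(lra)). lra. }
pose proof (proj1 (continuity_pt_locally _ _) (K_cont_s s0 (c s0 + e) Hs0 ltac:(lra)) (mkposreal _ Kp)) as L1.
assert (Km' : 0 < - K s0 (c s0 - e)) by lra.
pose proof (proj1 (continuity_pt_locally _ _) (K_cont_s s0 (c s0 - e) Hs0 ltac:(lra)) (mkposreal _ Km')) as L2.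
pose proof (loc_gt 1 s0 Hs0) as L3.
generalize (filter_and _ _ L1 (filter_and _ _ L2 L3)).
apply filter_imp. simpl. intros s [H1 [H2 H3]].
apply Rabs_def2 in H1. apply Rabs_def2 in H2.
destruct (c_spec s H3) as [[A B] C].
assert (c s < c s0 + e).
{ destruct (Rlt_or_le (c s) (c s0 + e)) as [L|L]; auto.
  destruct (Req_dec (c s) (c s0 + e)) as [E|E]. rewrite E in C. lra.
  pose proof (K_incr_t s (c s0 + e) (c s) H3 ltac:(lra) ltac:(lra)). lra. }
assert (c s0 - e < c s).
{ destruct (Rlt_or_le (c s0 - e) (c s)) as [L|L]; auto.
  destruct (Req_dec (c s) (c s0 - e)) as [E|E]. rewrite E in C. lra.
  pose proof (K_incr_t s (c s) (c s0 - e) H3 ltac:(lra) ltac:(lra)). lra. }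
apply Rabs_def1; lra.
Qed.

Lemma cp_plus f g x : continuity_pt f x -> continuity_pt g x -> continuity_pt (fun y => f y + g y) x.
Proof. apply continuity_pt_plus. Qed.
Lemma cp_mult f g x : continuity_pt f x -> continuity_pt g x -> continuity_pt (fun y => f y * g y) x.
Proof. apply continuity_pt_mult. Qed.
Lemma cp_opp f x : continuity_pt f x -> continuity_pt (fun y => - f y) x.
Proof. apply continuity_pt_opp. Qed.
Lemma cp_inv f x : continuity_pt f x -> f x <> 0 -> continuity_pt (fun y => / f y) x.
Proof. apply continuity_pt_inv. Qed.
Lemma cp_comp f g x : continuity_pt g x -> continuity_pt f (g x) -> continuity_pt (fun y => f (g y)) x.
Proof. intros. apply (continuity_pt_comp g f). auto. auto. Qed.
Lemma cp_const a x : continuity_pt (fun _ => a) x.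
Proof. apply continuity_pt_const. intros ? ?. reflexivity. Qed.
Lemma cp_id x : continuity_pt (fun y => y) x.
Proof. apply continuity_pt_id. Qed.

Definition sl (f : R -> R) (a d : R) (b : R) : R :=
  if Req_EM_T b a then d else (f b - f a) / (b - a).

Lemma sl_eq f a d b : f b - f a = sl f a d b * (b - a).
Proof.
unfold sl. destruct (Req_EM_T b a) as [E|E].
- subst. ring.
- field. lra.
Qed.

Lemma sl_at f a d : sl f a d a = d.
Proof. unfold sl. destruct (Req_EM_T a a); [auto|lra]. Qed.

Lemma sl_cont f a d : derivable_pt_lim f a d -> continuity_pt (sl f a d) a.
Proof.
intros H. apply continuity_pt_locally. intros eps.
destruct (H eps (cond_pos eps)) as [del Hd].
exists del. intros b Hb. change R in b. change (Rabs (b - a) < del) in Hb.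
rewrite sl_at. unfold sl. destruct (Req_EM_T b a) as [E|E].
- rewrite Rminus_eq_0, Rabs_R0. apply cond_pos.
- specialize (Hd (b - a) ltac:(lra) Hb). replace (a + (b - a)) with b in Hd by ring. exact Hd.
Qed.

Lemma sl_ln_pos a b : 0 < a -> 0 < b -> 0 < sl ln a (/ a) b.
Proof.
intros Ha Hb. unfold sl. destruct (Req_EM_T b a) as [E|E].
- apply Rinv_0_lt_compat; auto.
- destruct (Rlt_or_le b a) as [L|L].
  + assert (ln b < ln a) by (apply ln_increasing; lra).
    replace ((ln b - ln a) / (b - a)) with ((ln a - ln b) / (a - b)) by (field; lra).
    apply Rdiv_lt_0_compat; lra.
  + assert (ln a < ln b) by (apply ln_increasing; lra).
    apply Rdiv_lt_0_compat; lra.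
Qed.

Definition P1 (x : R) := (x - 1) * ln (x - 1).

Lemma P1_derive x : 1 < x -> derivable_pt_lim P1 x (ln (x - 1) + 1).
Proof.
intros Hx. apply is_derive_Reals. unfold P1. auto_derive.
- lra.
- unfold Rminus. field. lra.
Qed.

Lemma K_split s t : K s t = ln t + (s - 1) * ln (s + t) - P1 s.
Proof. unfold K, P1. ring. Qed.

Definition cder (s : R) : R :=
  - (ln (s + c s) - ln (s - 1) - (1 + c s) / (s + c s)) / (/ c s + (s - 1) / (s + c s)).

Lemma c_derive s0 : 1 < s0 -> derivable_pt_lim c s0 (cder s0).
Proof.
intros Hs0. destruct (c_spec s0 Hs0) as [[A0 B0] C0].
set (c0 := c s0) in *.
set (S1 := fun s => sl ln c0 (/ c0) (c s)).
set (S2 := fun s => sl ln (s0 + c0) (/ (s0 + c0)) (s + c s)).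
set (S3 := fun s => sl P1 s0 (ln (s0 - 1) + 1) s).
set (Q := fun s => - (ln (s + c s) + (s0 - 1) * S2 s - S3 s) / (S1 s + (s0 - 1) * S2 s)).
assert (Hc := c_cont s0 Hs0).
assert (HS1 : continuity_pt S1 s0).
{ unfold S1. apply cp_comp; auto. fold c0. apply sl_cont. apply derivable_pt_lim_ln; auto. }
assert (HS2 : continuity_pt S2 s0).
{ unfold S2. apply (cp_comp _ (fun s => s + c s)). apply cp_plus; auto. apply cp_id.
  fold c0. apply sl_cont. apply derivable_pt_lim_ln; lra. }
assert (HS3 : continuity_pt S3 s0).
{ unfold S3. apply sl_cont. apply P1_derive; auto. }
assert (E1 : S1 s0 = / c0) by (unfold S1; fold c0; apply sl_at).
assert (E2 : S2 s0 = / (s0 + c0)) by (unfold S2; fold c0; apply sl_at).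
assert (E3 : S3 s0 = ln (s0 - 1) + 1) by (unfold S3; apply sl_at).
assert (Hden : S1 s0 + (s0 - 1) * S2 s0 <> 0).
{ rewrite E1, E2. assert (0 < / c0) by (apply Rinv_0_lt_compat; lra).
  assert (0 < / (s0 + c0)) by (apply Rinv_0_lt_compat; lra). nra. }
assert (HQ : continuity_pt Q s0).
{ unfold Q. unfold Rdiv. apply cp_mult.
  - apply cp_opp. apply cp_plus. apply cp_plus.
    + apply (cp_comp ln (fun s => s + c s)). apply cp_plus; auto. apply cp_id.
      apply derive_cont with (d := / (s0 + c s0)). apply is_derive_ln. fold c0. lra.
    + apply cp_mult; auto. apply cp_const.
    + apply cp_opp; auto.
  - apply cp_inv; auto. apply cp_plus; auto. apply cp_mult; auto. apply cp_const. }
assert (EQ : Q s0 = cder s0).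
{ unfold Q, cder. rewrite E1, E2, E3. fold c0.
  assert (0 < / c0) by (apply Rinv_0_lt_compat; lra).
  assert (0 < (s0 - 1) / (s0 + c0)) by (apply Rdiv_lt_0_compat; lra).
  field. split; [lra|]. split; [lra|]. nra. }
rewrite <- EQ.
assert (Hid : forall s, 1 < s -> s <> s0 -> (c s - c0) / (s - s0) = Q s).
{ intros s Hs Hne. destruct (c_spec s Hs) as [[A B] C].
  rewrite K_split in C, C0.
  pose proof (sl_eq ln c0 (/ c0) (c s)) as T1.
  pose proof (sl_eq ln (s0 + c0) (/ (s0 + c0)) (s + c s)) as T2.
  pose proof (sl_eq P1 s0 (ln (s0 - 1) + 1) s) as T3.
  fold (S1 s) in T1. fold (S2 s) in T2. fold (S3 s) in T3.
  assert (Q1 : 0 < S1 s) by (apply sl_ln_pos; lra).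
  assert (Q2 : 0 < S2 s) by (apply sl_ln_pos; lra).
  assert (Key : (c s - c0) * (S1 s + (s0 - 1) * S2 s) =
     - (s - s0) * (ln (s + c s) + (s0 - 1) * S2 s - S3 s)).
  { replace (c s) with (c s) in * by reflexivity.
    assert (ln (c s) = ln c0 + S1 s * (c s - c0)) by lra.
    assert (ln (s + c s) = ln (s0 + c0) + S2 s * (s + c s - (s0 + c0))) by lra.
    assert (P1 s = P1 s0 + S3 s * (s - s0)) by lra.
    nra. }
  unfold Q. field_simplify_eq; [|split; [nra|lra]].
  nra. }
intros eps Heps.
pose proof (proj1 (continuity_pt_locally _ _) HQ (mkposreal _ Heps)) as [d1 Hd1].
assert (Hp : 0 < Rmin d1 (s0 - 1)) by (apply Rmin_pos; [apply cond_pos|lra]).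
exists (mkposreal _ Hp). intros h Hh Hhd. simpl in Hhd.
assert (Hh1 : Rabs h < d1) by (eapply Rlt_le_trans; [exact Hhd|apply Rmin_l]).
assert (Hh2 : Rabs h < s0 - 1) by (eapply Rlt_le_trans; [exact Hhd|apply Rmin_r]).
apply Rabs_def2 in Hh2.
specialize (Hd1 (s0 + h)). simpl in Hd1.
rewrite <- (Hid (s0 + h)) in Hd1 by lra.
replace (s0 + h - s0) with h in Hd1 by ring. fold c0. apply Hd1.
change (Rabs (s0 + h - s0) < d1). replace (s0 + h - s0) with h by ring. auto.
Qed.

Lemma dplus f g x a b : derivable_pt_lim f x a -> derivable_pt_lim g x b -> derivable_pt_lim (fun y => f y + g y) x (a + b).
Proof. apply derivable_pt_lim_plus. Qed.
Lemma dmult f g x a b : derivable_pt_lim f x a -> derivable_pt_lim g x b -> derivable_pt_lim (fun y => f y * g y) x (a * g x + f x * b).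
Proof. intros. apply derivable_pt_lim_mult; auto. Qed.
Lemma dcomp f g x a b : derivable_pt_lim g x a -> derivable_pt_lim f (g x) b -> derivable_pt_lim (fun y => f (g y)) x (b * a).
Proof. intros. apply (derivable_pt_lim_comp g f); auto. Qed.
Lemma dconst a x : derivable_pt_lim (fun _ => a) x 0.
Proof. apply derivable_pt_lim_const. Qed.
Lemma did x : derivable_pt_lim (fun y => y) x 1.
Proof. apply derivable_pt_lim_id. Qed.
Lemma dinvf f x l : derivable_pt_lim f x l -> f x <> 0 -> derivable_pt_lim (fun y => / f y) x (- l / (f x) ^ 2).
Proof. intros. apply is_derive_Reals. apply is_derive_inv; auto. apply is_derive_Reals; auto. Qed.
Lemma dext f g x l l' : (forall y, f y = g y) -> l = l' -> derivable_pt_lim f x l -> derivable_pt_lim g x l'.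
Proof. intros H E D. subst. apply is_derive_Reals. apply is_derive_ext with f; auto. apply is_derive_Reals; auto. Qed.

Inductive ex : Type :=
| ECst (r : R) | ES | EC | EInvS | EInvS1 | EInvC1 | EInvSC | ELnSC | ELnS1
| EAdd (a b : ex) | EMul (a b : ex).

Fixpoint eval (e : ex) (s : R) : R :=
  match e with
  | ECst r => r
  | ES => s
  | EC => c s
  | EInvS => / s
  | EInvS1 => / (s - 1)
  | EInvC1 => / (1 + c s)
  | EInvSC => / (s + c s)
  | ELnSC => ln (s + c s)
  | ELnS1 => ln (s - 1)
  | EAdd a b => eval a s + eval b s
  | EMul a b => eval a s * eval b s
  end.

Definition Ec : ex :=
  let A := EMul (EMul EC (EAdd ES EC)) (EMul EInvS EInvC1) in
  EAdd (EMul (ECst (-1)) (EMul ELnSC A)) (EAdd (EMul ELnS1 A) (EMul EC EInvS)).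

Fixpoint deriv (e : ex) : ex :=
  match e with
  | ECst _ => ECst 0
  | ES => ECst 1
  | EC => Ec
  | EInvS => EMul (ECst (-1)) (EMul EInvS EInvS)
  | EInvS1 => EMul (ECst (-1)) (EMul EInvS1 EInvS1)
  | EInvC1 => EMul (ECst (-1)) (EMul (EMul EInvC1 EInvC1) Ec)
  | EInvSC => EMul (ECst (-1)) (EMul (EMul EInvSC EInvSC) (EAdd (ECst 1) Ec))
  | ELnSC => EMul EInvSC (EAdd (ECst 1) Ec)
  | ELnS1 => EInvS1
  | EAdd a b => EAdd (deriv a) (deriv b)
  | EMul a b => EAdd (EMul (deriv a) b) (EMul a (deriv b))
  end.

Lemma eval_Ec s : 1 < s -> eval Ec s = cder s.
Proof.
intros Hs. destruct (c_spec s Hs) as [[A B] C]. unfold Ec, cder. simpl.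
field. repeat split; try lra. nra.
Qed.

Lemma dc s : 1 < s -> derivable_pt_lim c s (eval Ec s).
Proof. intros. rewrite eval_Ec; auto. apply c_derive; auto. Qed.

Lemma deriv_ok e s : 1 < s -> derivable_pt_lim (eval e) s (eval (deriv e) s).
Proof.
intros Hs. destruct (c_spec s Hs) as [[A B] C].
induction e; simpl.
- apply dconst.
- apply did.
- apply dc; auto.
- eapply dext; [intro; reflexivity| |apply dinvf; [apply did|lra]]. simpl. field. lra.
- eapply dext; [intro; reflexivity| |apply dinvf; [apply dplus; [apply did|apply dconst]|lra]]. simpl. field. lra.
- eapply dext; [intro; reflexivity| |apply dinvf; [apply dplus; [apply dconst|apply dc; auto]|lra]]. simpl. field. lra.
- eapply dext; [intro; reflexivity| |apply dinvf; [apply dplus; [apply did|apply dc; auto]|lra]]. simpl. field. lra.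
- eapply dext; [intro; reflexivity| |apply (dcomp ln (fun y => y + c y)); [apply dplus; [apply did|apply dc; auto]|apply derivable_pt_lim_ln; lra]].
  simpl. field. lra.
- eapply dext; [intro; reflexivity| |apply (dcomp ln (fun y => y - 1)); [apply dplus; [apply did|apply dconst]|apply derivable_pt_lim_ln; lra]].
  simpl. field. lra.
- apply dplus; auto.
- apply dmult; auto.
Qed.

Fixpoint dn (n : nat) (e : ex) : ex :=
  match n with O => e | S m => deriv (dn m e) end.

Lemma Dn_eval n : forall e s, 1 < s -> Derive_n (eval e) n s = eval (dn n e) s.
Proof.
induction n; intros e s Hs; simpl; auto.
rewrite (Derive_ext_loc _ (eval (dn n e))).
- apply is_derive_unique. apply is_derive_Reals. apply deriv_ok; auto.
- generalize (loc_gt 1 s Hs). apply filter_imp. intros y Hy. apply IHn; auto.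
Qed.

Lemma exn_eval n : forall e s, 1 < s -> ex_derive_n (eval e) n s.
Proof.
destruct n; intros e s Hs; simpl; auto.
apply ex_derive_ext_loc with (eval (dn n e)).
- generalize (loc_gt 1 s Hs). apply filter_imp. intros y Hy. symmetry. apply Dn_eval; auto.
- exists (eval (deriv (dn n e)) s). apply is_derive_Reals. apply deriv_ok; auto.
Qed.

Lemma c_smooth n s : 1 < s -> ex_derive_n c n s.
Proof. intros. apply ex_derive_n_ext with (eval EC). intro; reflexivity. apply exn_eval; auto. Qed.

Lemma c_simple s : 1 < s -> exists d, is_derive (u s) (c s) d /\ d <> 0.
Proof.
intros Hs. destruct (c_spec s Hs) as [[A B] C].
eexists. split. apply u_derive; auto; lra.
assert (0 < exp ((s - 1) * ln ((s + c s) / (s - 1)))) by apply exp_pos.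
assert (0 < c s * (s - 1) / (s + c s)) by (apply Rdiv_lt_0_compat; nra).
nra.
Qed.

Definition g0 (x : R) := x * exp (x + 1).

Lemma g0_incr x y : 0 <= x -> x < y -> g0 x < g0 y.
Proof.
intros. unfold g0. assert (exp (x + 1) < exp (y + 1)) by (apply exp_increasing; lra).
assert (0 < exp (x + 1)) by apply exp_pos. nra.
Qed.

Lemma c0_exu : exists! c0 : R, (0 < c0 < 1) /\ c0 * exp (c0 + 1) = 1.
Proof.
destruct (Ranalysis5.IVT_interv (fun x => g0 x - 1) 0 1) as [z [Hz1 Hz2]].
- intros a Ha. apply cp_plus; [|apply cp_const]. unfold g0. apply cp_mult. apply cp_id.
  apply (cp_comp exp (fun x => x + 1)). apply cp_plus. apply cp_id. apply cp_const.
  apply derivable_continuous_pt. apply derivable_pt_exp.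
- lra.
- unfold g0. lra.
- unfold g0. rewrite Rmult_1_l. pose proof (exp_ineq1 (1 + 1) ltac:(lra)). lra.
- assert (z <> 0). { intro E. subst. unfold g0 in Hz2. lra. }
  assert (z <> 1). { intro E. subst. unfold g0 in Hz2. rewrite Rmult_1_l in Hz2. pose proof (exp_ineq1 (1 + 1) ltac:(lra)). lra. }
  exists z. split. split. lra. unfold g0 in Hz2. lra.
  intros y [Hy1 Hy2]. destruct (Rtotal_order z y) as [L|[L|L]]; auto.
  + pose proof (g0_incr z y ltac:(lra) L). unfold g0 in *. lra.
  + pose proof (g0_incr y z ltac:(lra) L). unfold g0 in *. lra.
Qed.

Lemma ln_ge_1 y : 0 < y -> ln y <= y - 1.
Proof. intros. pose proof (exp_ineq1_le (ln y)). rewrite exp_ln in H0; auto. lra. Qed.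

Lemma c_lim c0 : 0 < c0 < 1 -> c0 * exp (c0 + 1) = 1 -> is_lim c p_infty c0.
Proof.
intros Hc0 E0. apply is_lim_spec. intros eps.
assert (Hl0 : ln c0 + (c0 + 1) = 0).
{ rewrite <- (ln_exp (c0 + 1)), <- ln_mult by (try apply exp_pos; lra). rewrite E0. apply ln_1. }
set (t := c0 + eps / 2).
assert (Heps := cond_pos eps).
assert (Ht : c0 < t) by (unfold t; lra).
assert (Hd : 0 < ln t + (1 + t)).
{ assert (1 < t * exp (t + 1)) by (pose proof (g0_incr c0 t ltac:(lra) Ht); unfold g0 in *; lra).
  assert (0 < ln (t * exp (t + 1))) by (rewrite <- ln_1; apply ln_increasing; lra).
  rewrite ln_mult, ln_exp in H0 by (try apply exp_pos; lra). lra. }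
set (d := ln t + (1 + t)) in Hd.
exists (Rmax 1 ((1 + t) ^ 2 / d)). intros s Hs.
assert (Hs1 : 1 < s) by (eapply Rle_lt_trans; [apply Rmax_l|exact Hs]).
assert (Hs2 : (1 + t) ^ 2 / d < s) by (eapply Rle_lt_trans; [apply Rmax_r|exact Hs]).
destruct (c_spec s Hs1) as [[A B] C].
assert (L1 : K s c0 < 0).
{ unfold K. rewrite <- ln_div by lra.
  pose proof (ln_lt_sub1 ((s + c0) / (s - 1)) ltac:(apply Rdiv_lt_0_compat; lra)).
  assert ((s + c0) / (s - 1) <> 1).
  { intro Z. assert (s + c0 = s - 1) by (apply (Rmult_eq_reg_r (/ (s - 1))); [|apply Rinv_neq_0_compat; lra]; unfold Rdiv in Z; rewrite Z; field; lra). lra. }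
  specialize (H H0).
  assert ((s - 1) * ln ((s + c0) / (s - 1)) < (s - 1) * ((s + c0) / (s - 1) - 1)) by (apply Rmult_lt_compat_l; lra).
  replace ((s - 1) * ((s + c0) / (s - 1) - 1)) with (1 + c0) in H1 by (field; lra). lra. }
assert (L2 : 0 < K s t).
{ unfold K.
  assert (ln (s - 1) - ln (s + t) <= (s - 1) / (s + t) - 1).
  { rewrite <- ln_div by lra. apply ln_ge_1. apply Rdiv_lt_0_compat; lra. }
  assert ((s - 1) / (s + t) - 1 = - ((1 + t) / (s + t))) by (field; lra).
  assert ((s - 1) * ((1 + t) / (s + t)) <= (s - 1) * (ln (s + t) - ln (s - 1))) by (apply Rmult_le_compat_l; lra).
  assert ((s - 1) * ((1 + t) / (s + t)) = (1 + t) - (1 + t) ^ 2 / (s + t)) by (field; lra).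
  assert ((1 + t) ^ 2 / (s + t) < d).
  { apply Rmult_lt_reg_r with (s + t). lra. unfold Rdiv. rewrite Rmult_assoc, Rinv_l by lra.
    apply Rmult_lt_reg_r with (/ d). apply Rinv_0_lt_compat; lra.
    replace (d * (s + t) * / d) with (s + t) by (field; lra). rewrite Rmult_1_r.
    unfold Rdiv in Hs2. lra. }
  unfold d in H3. lra. }
assert (c0 < c s).
{ destruct (Rlt_or_le c0 (c s)) as [L|L]; auto.
  destruct (Req_dec (c s) c0) as [Z|Z]. rewrite Z in C. lra.
  pose proof (K_incr_t s (c s) c0 Hs1 A ltac:(lra)). lra. }
assert (c s < t).
{ destruct (Rlt_or_le (c s) t) as [L|L]; auto.
  destruct (Req_dec (c s) t) as [Z|Z]. rewrite Z in C. lra.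
  pose proof (K_incr_t s t (c s) Hs1 ltac:(lra) ltac:(lra)). lra. }
apply Rabs_def1; unfold t in *; lra.
Qed.

Lemma pow_odd_opp j x : (- x) ^ (2 * j + 1) = - x ^ (2 * j + 1).
Proof.
induction j. simpl. ring.
replace (2 * S j + 1)%nat with (S (S (2 * j + 1))) by lia.
simpl in *. rewrite IHj. ring.
Qed.

Lemma psi_part k : (1 <= k)%nat ->
  let n := (2 * k)%nat in
  -INR n - c (INR n) < 0 /\
  psi n (-INR n - c (INR n)) = 0 /\
  (forall z : R, z < 0 -> psi n z = 0 -> z = -INR n - c (INR n)).
Proof.
intros Hk n.
assert (Hm : (n - 1 = 2 * (k - 1) + 1)%nat) by (unfold n; lia).
assert (Hn2 : 2 <= INR n).
{ replace 2 with (INR 2) by (simpl; ring). apply le_INR. unfold n; lia. }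
assert (Hn1 : INR n - 1 = INR (n - 1)) by (rewrite minus_INR by (unfold n; lia); simpl; ring).
set (s := INR n) in *.
destruct (c_spec s ltac:(lra)) as [[A B] C].
assert (Hu : forall t, 0 < t -> u s t = t * (s + t) ^ (n - 1) / (s - 1) ^ (n - 1)).
{ intros t Ht. unfold u. rewrite Hn1, Rpower_pow by (apply Rdiv_lt_0_compat; lra).
  unfold Rdiv. rewrite Rpow_mult_distr, pow_inv. ring. }
assert (Hpos : 0 < (s - 1) ^ (n - 1)) by (apply pow_lt; lra).
assert (Hus : u s (c s) = 1) by (apply u_one_K; lra).
split; [lra|]. split.
- unfold psi. fold s.
  replace (- s - c s) with (- (s + c s)) by ring. rewrite Hm, pow_odd_opp, <- Hm.
  rewrite Hu in Hus by lra.
  assert (c s * (s + c s) ^ (n - 1) = (s - 1) ^ (n - 1)).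
  { apply (Rmult_eq_reg_r (/ (s - 1) ^ (n - 1))). rewrite Rinv_r by lra. exact Hus.
    apply Rinv_neq_0_compat. lra. }
  lra.
- intros z Hz Hp. unfold psi in Hp. fold s in Hp.
  assert (Hzm : z ^ (n - 1) < 0).
  { replace z with (- (- z)) by ring. rewrite Hm, pow_odd_opp.
    pose proof (pow_lt (- z) (2 * (k - 1) + 1) ltac:(lra)). lra. }
  assert (Hzn : z + s < 0).
  { destruct (Rlt_or_le (z + s) 0) as [L|L]; auto. nra. }
  set (t := - z - s).
  assert (Ht : 0 < t) by (unfold t; lra).
  assert (Ez : z = - (s + t)) by (unfold t; ring).
  rewrite Ez in Hp. rewrite Hm, pow_odd_opp, <- Hm in Hp.
  assert (u s t = 1).
  { rewrite Hu by lra. replace (- (s + t) + s) with (- t) in Hp by ring.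
    field_simplify_eq; lra. }
  pose proof (c_unique s t ltac:(lra) ltac:(lra) H). rewrite Ez, <- H0. unfold t; ring.
Qed.

Theorem mainTheorem14 :
  exists c : R -> R,
    (* unique solution with t >= -1, simple, lying in (0,1) *)
    (forall s : R, 1 < s ->
        -1 <= c s /\ u s (c s) = 1 /\
        (forall t : R, -1 <= t -> u s t = 1 -> t = c s) /\
        (exists d : R, is_derive (u s) (c s) d /\ d <> 0) /\
        0 < c s < 1) /\
    (* C^infinity on (1, oo) *)
    (forall (n : nat) (s : R), 1 < s -> ex_derive_n c n s) /\
    (* strictly decreasing on (1, oo) *)
    (forall s1 s2 : R, 1 < s1 -> s1 < s2 -> c s2 < c s1) /\
    (* c0 : the unique real in (0,1) with c0 e^(c0+1) = 1, and c -> c0 *)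
    (exists! c0 : R, (0 < c0 < 1) /\ c0 * exp (c0 + 1) = 1) /\
    (forall c0 : R, 0 < c0 < 1 -> c0 * exp (c0 + 1) = 1 ->
        is_lim c p_infty c0) /\
    (* for every even integer s >= 2, the negative real root of psi_s is -s - c(s) *)
    (forall k : nat, (1 <= k)%nat ->
        let n := (2 * k)%nat in
        -INR n - c (INR n) < 0 /\
        psi n (-INR n - c (INR n)) = 0 /\
        (forall z : R, z < 0 -> psi n z = 0 -> z = -INR n - c (INR n))).
Proof.
exists c. split; [|split; [|split; [|split; [|split]]]].
- intros s Hs. destruct (c_spec s Hs) as [[A B] C].
  split; [lra|]. split; [apply u_one_K; lra|]. split.
  + intros t Ht Hu. apply c_unique; auto.
  + split; [apply c_simple; auto|lra].
- intros n s Hs. apply c_smooth; auto.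
- intros s1 s2 H1 H2. apply c_decr; auto.
- apply c0_exu.
- apply c_lim.
- apply psi_part.
Qed.
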